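(* Let $G$ be a supergraceful graph with $p$ nodes and $q$ edges having a total labeling $\varphi$ with $1 \in N(\varphi)$. Then for each integer $t \ge 0$ there exists a supergraceful graph with $p+t$ nodes and $q+t$ edges.
   Context: Graphs are finite, simple. For a labeling $\varphi: V(G) \to \mathbb{Z}_{>0}$ let $N(\varphi) = \{\varphi(x) : x \in V(G)\}$ and $E(\varphi) = \{|\varphi(x)-\varphi(y)| : xy \in E(G)\}$. A total labeling of a graph with $p$ nodes and $q$ edges is a map $\varphi$ such that the $p$ node labels and the $q$ edge labels are pairwise distinct and $N(\varphi) \cup E(\varphi) = \{1,\dots,p+q\}$; a graph is supergraceful if it admits a total labeling. *)

(* Defs.v *)
From mathcomp Require Import all_boot all_order all_algebra.
Set Implicit Arguments. Unset Strict Implicit. Unset Printing Implicit Defensive.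

Definition simple_graph (T : finType) (e : rel T) : Prop :=
  symmetric e /\ irreflexive e.

Definition edges (T : finType) (e : rel T) : {set {set T}} :=
  [set [set xy.1; xy.2] | xy in [set xy : T * T | e xy.1 xy.2]].

Definition ldist (a b : nat) : nat := `|(a%:Z - b%:Z)%R|%N.

Definition total_labeling (T : finType) (e : rel T) (phi : T -> nat) : Prop :=
  [/\ (forall x, 0 < phi x),
      injective phi,
      (forall x y u v, e x y -> e u v ->
         ldist (phi x) (phi y) = ldist (phi u) (phi v) ->
         [set x; y] = [set u; v]),
      (forall x u v, e u v -> phi x <> ldist (phi u) (phi v)) &
      (* N(phi) u E(phi) = {1, ..., p + q} *)
      (forall k, (1 <= k <= #|T| + #|edges e|) <->
         ((exists x, phi x = k) \/
          (exists u v, e u v /\ ldist (phi u) (phi v) = k)))].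

Definition supergraceful (T : finType) (e : rel T) : Prop :=
  exists phi : T -> nat, total_labeling e phi.

(* Main.v *)
Require Import Defs.
From mathcomp Require Import all_boot all_order all_algebra zify.

Lemma ldistE a b : ldist a b = (a - b) + (b - a).
Proof. rewrite /ldist. lia. Qed.

Lemma set2_eq (V : finType) (a b c d : V) :
  [set a; b] = [set c; d] <-> (a = c /\ b = d) \/ (a = d /\ b = c).
Proof.
split.
- move=> H.
  have ha : a \in [set c; d] by rewrite -H !inE eqxx.
  have hb : b \in [set c; d] by rewrite -H !inE eqxx orbT.
  have hc : c \in [set a; b] by rewrite H !inE eqxx.
  have hd : d \in [set a; b] by rewrite H !inE eqxx orbT.
  rewrite !inE in ha hb hc hd.
  case/orP: ha => /eqP ha; case/orP: hb => /eqP hb;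
  case/orP: hc => /eqP hc; case/orP: hd => /eqP hd; subst; auto.
- by case=> [[-> ->]|[-> ->]] //; rewrite setUC.
Qed.

Lemma edgesP (V : finType) (r : rel V) S :
  S \in edges r <-> exists x y, r x y /\ S = [set x; y].
Proof.
split.
- rewrite /edges; by case/imsetP => [[x y]]; rewrite inE /= => rxy ->; exists x, y.
- case=> x [y [rxy ->]]; rewrite /edges; apply/imsetP; exists (x, y) => //; by rewrite inE.
Qed.

Section Transport.
Variables (U V : finType) (r : rel U) (f : V -> U) (g : U -> V).
Hypotheses (fK : cancel f g) (gK : cancel g f).
Let r' : rel V := fun a b => r (f a) (f b).

Lemma tr_simple : simple_graph r -> simple_graph r'.
Proof. by case=> sy ir; split => [a b|a]; rewrite /r' ?ir //; apply: sy. Qed.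

Lemma tr_edges : #|edges r'| = #|edges r|.
Proof.
have -> : edges r' = [set [set g x | x in S] | S : {set U} in edges r].
  apply/setP => S; apply/idP/idP.
  - move/edgesP => [a [b [rab ->]]]; apply/imsetP; exists [set f a; f b].
      by apply/edgesP; exists (f a), (f b).
    by rewrite imsetU1 imset_set1 !fK.
  - case/imsetP => S' /edgesP [x [y [rxy ->]]] ->.
    apply/edgesP; exists (g x), (g y); split; first by rewrite /r' !gK.
    by rewrite imsetU1 imset_set1.
rewrite card_imset //; apply: imset_inj; exact: can_inj gK.
Qed.

Lemma tr_card : #|V| = #|U|.
Proof. by apply/eqP; rewrite eqn_leq (leq_card _ (can_inj fK)) (leq_card _ (can_inj gK)). Qed.

Lemma tr_label psi : total_labeling r psi -> total_labeling r' (psi \o f).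
Proof.
case=> pos inj c3 c4 c5; split.
- by move=> x; apply: pos.
- by apply: inj_comp => //; exact: can_inj fK.
- move=> x y u v rxy ruv /= E; have /set2_eq H := c3 _ _ _ _ rxy ruv E; apply/set2_eq.
  have fi := can_inj fK.
  by case: H => [[/fi -> /fi ->]|[/fi -> /fi ->]]; [left|right].
- by move=> x u v ruv; apply: c4.
- move=> k; rewrite tr_card tr_edges c5; split.
  + case=> [[x <-]|[u [v [ruv <-]]]]; first by left; exists (g x); rewrite /= gK.
    by right; exists (g u), (g v); rewrite /r' /= !gK.
  + case=> [[x <-]|[u [v [ruv <-]]]]; first by left; exists (f x).
    by right; exists (f u), (f v).
Qed.
End Transport.

Section Star.
Variables (T : finType) (e : rel T) (phi : T -> nat) (x0 : T) (t : nat).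
Hypotheses (sg : simple_graph e) (tl : total_labeling e phi) (hx0 : phi x0 = 1).
Let n := #|T| + #|edges e|.

Definition star : rel (T + 'I_t)%type := fun a b =>
  match a, b with
  | inl x, inl y => e x y
  | inl x, inr _ => x == x0
  | inr _, inl y => y == x0
  | inr _, inr _ => false
  end.

Definition psi (a : (T + 'I_t)%type) : nat :=
  match a with inl x => phi x | inr i => n + i.*2 + 2 end.

Lemma star_simple : simple_graph star.
Proof.
case: sg => sy ir; split.
- by case=> [x|i] [y|j] //=; apply: sy.
- by case=> [x|i] //=; apply: ir.
Qed.

Lemma inl_inj : injective (@inl T 'I_t). Proof. by move=> x y []. Qed.

Lemma star_edges : edges star =
  [set [set inl x | x in S] | S : {set T} in edges e] :|: [set [set inl x0; inr i] | i : 'I_t].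
Proof.
apply/setP => S; rewrite in_setU; apply/idP/idP.
- move/edgesP => [[x|i] [[y|j] [/= rab ->]]] //.
  + apply/orP; left; apply/imsetP; exists [set x; y]; first by apply/edgesP; exists x, y.
    by rewrite imsetU1 imset_set1.
  + by apply/orP; right; apply/imsetP; exists j => //; move/eqP: rab => ->.
  + by apply/orP; right; apply/imsetP; exists i => //; move/eqP: rab => ->; rewrite setUC.
- case/orP.
  + case/imsetP => S' /edgesP [x [y [rxy ->]]] ->.
    apply/edgesP; exists (inl x), (inl y); split => //.
    by rewrite imsetU1 imset_set1.
  + case/imsetP => i _ ->; apply/edgesP; exists (inl x0), (inr i); split => //=.
Qed.

Lemma star_card_edges : #|edges star| = #|edges e| + t.
Proof.
rewrite star_edges cardsU.
have -> : [set [set inl x | x in S] | S : {set T} in edges e] :&: [set [set inl x0; inr i] | i : 'I_t] = set0.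
  apply/setP => S; rewrite !inE; apply/negP => /andP [/imsetP [S' _ ->] /imsetP [i _ E]].
  have : inr i \in [set inl x | x in S'] by rewrite E !inE eqxx orbT.
  by case/imsetP.
rewrite cards0 subn0 card_imset; last exact: imset_inj inl_inj.
rewrite (@card_imset _ _ (fun i : 'I_t => [set @inl T 'I_t x0; inr i])) ?card_ord //.
move=> i j E; have : inr i \in [set @inl T 'I_t x0; inr j] by rewrite -E !inE eqxx orbT.
by rewrite !inE => /orP [] // /eqP [].
Qed.

Lemma phi_le x : 0 < phi x <= n.
Proof. case: tl => _ _ _ _ c5; apply/(c5 (phi x)); left; by exists x. Qed.

Lemma edge_le u v : e u v -> 0 < ldist (phi u) (phi v) <= n.
Proof. case: tl => _ _ _ _ c5 euv; apply/(c5 _); right; by exists u, v. Qed.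

Lemma new_ld (i : 'I_t) : ldist (n + i.*2 + 2) 1 = n + i.*2 + 1 /\ ldist 1 (n + i.*2 + 2) = n + i.*2 + 1.
Proof. rewrite !ldistE; lia. Qed.

Lemma star_label : total_labeling star psi.
Proof.
have [pos inj c3 c4 c5] := tl.
split.
- by case=> [x|i] //=; rewrite addn2.
- case=> [x|i] [y|j] //= E.
  + by rewrite (inj _ _ E).
  + have := phi_le x; lia.
  + have := phi_le y; lia.
  + by congr inr; apply: val_inj => /=; lia.
- case=> [x|i] [y|j] [u|k] [v|l] //= exy euv; rewrite ?hx0;
    try (match type of exy with is_true (_ == _) => move/eqP: exy => exy; subst end);
    try (match type of euv with is_true (_ == _) => move/eqP: euv => euv; subst end); rewrite ?hx0.
  + move=> E; have /set2_eq H := c3 _ _ _ _ exy euv E; apply/set2_eq.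
    by case: H => [[-> ->]|[-> ->]]; [left|right].
  + rewrite (proj2 (new_ld l)); have := edge_le _ _ exy; lia.
  + rewrite (proj1 (new_ld k)); have := edge_le _ _ exy; lia.
  + rewrite (proj2 (new_ld j)); have := edge_le _ _ euv; lia.
  + rewrite (proj2 (new_ld j)) (proj2 (new_ld l)) => E.
    by have -> : j = l by apply: val_inj => /=; lia.
  + rewrite (proj2 (new_ld j)) (proj1 (new_ld k)) => E.
    have -> : j = k by apply: val_inj => /=; lia.
    by rewrite setUC.
  + rewrite (proj1 (new_ld i)); have := edge_le _ _ euv; lia.
  + rewrite (proj1 (new_ld i)) (proj2 (new_ld l)) => E.
    have -> : i = l by apply: val_inj => /=; lia.
    by rewrite setUC.
  + rewrite (proj1 (new_ld i)) (proj1 (new_ld k)) => E.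
    by have -> : i = k by apply: val_inj => /=; lia.
- case=> [x|i] [u|k] [v|l] //= euv; try (match type of euv with is_true (_ == _) => move/eqP: euv => euv; subst end); rewrite ?hx0.
  + exact: c4.
  + rewrite (proj2 (new_ld l)); have := phi_le x; lia.
  + rewrite (proj1 (new_ld k)); have := phi_le x; lia.
  + have := edge_le _ _ euv; lia.
  + rewrite (proj2 (new_ld l)); lia.
  + rewrite (proj1 (new_ld k)); lia.
- move=> k; rewrite card_sum card_ord star_card_edges.
  have -> : #|T| + t + (#|edges e| + t) = n + t.*2 by rewrite /n -addnn; lia.
  split.
  + move=> /andP [k1 k2].
    have [kn|kn] := leqP k n.
      have /c5 : 1 <= k <= #|T| + #|edges e| by rewrite k1.
      case=> [[x <-]|[u [v [euv <-]]]]; first by left; exists (inl x).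
      by right; exists (inl u), (inl v).
    set m := k - n - 1.
    have Hm := odd_double_half m.
    have jt : m./2 < t by rewrite -!mul2n in Hm *; case: (odd m) Hm; lia.
    case: (odd m) Hm => /= Hm.
      left; exists (inr (Ordinal jt)) => /=; lia.
    right; exists (inr (Ordinal jt)), (inl x0); split => //=.
    rewrite hx0 (proj1 (new_ld (Ordinal jt))) /=; lia.
  + case=> [[[x|i] <-]|[[u|i] [[v|j] [/= euv <-]]]] //.
    * have := phi_le x; rewrite /=; lia.
    * have := ltn_ord i; rewrite /=; lia.
    * have := edge_le _ _ euv; rewrite /=; lia.
    * move/eqP: euv => ->; rewrite /= hx0 (proj2 (new_ld j)); have := ltn_ord j; lia.
    * move/eqP: euv => ->; rewrite /= hx0 (proj1 (new_ld i)); have := ltn_ord i; lia.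
Qed.
End Star.

Section Bij. Variable U : finType. Variable N : nat. Hypothesis H : #|U| = N.
Definition ff (i : 'I_N) : U := enum_val (cast_ord (esym H) i).
Definition gg (x : U) : 'I_N := cast_ord H (enum_rank x).
Lemma ffK : cancel ff gg. Proof. move=> i; rewrite /ff /gg enum_valK; apply: val_inj => //. Qed.
Lemma ggK : cancel gg ff. Proof. move=> i; rewrite /ff /gg cast_ordK enum_rankK //. Qed.
End Bij.

Theorem theorem8p5 (T : finType) (e : rel T) (phi : T -> nat) :
  simple_graph e ->
  total_labeling e phi ->
  (exists x, phi x = 1) ->
  forall t : nat,
    exists e' : rel 'I_(#|T| + t),
      [/\ simple_graph e', #|edges e'| = #|edges e| + t & supergraceful e'].
Proof.
move=> sg tl [x0 hx0] t.
have H := card_sum T (ordinal t); rewrite card_ord in H.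
pose f := @ff _ _ H; pose g := @gg _ _ H.
have fK : cancel f g := @ffK _ _ H.
have gK : cancel g f := @ggK _ _ H.
exists (fun a b => star T e x0 t (f a) (f b)); split.
- exact: (@tr_simple _ _ _ f (star_simple T e x0 t sg)).
- by rewrite (@tr_edges _ _ _ _ _ fK gK) star_card_edges.
- exists (psi T e phi t \o f); apply: (@tr_label _ _ _ _ _ fK gK).
  exact: star_label.
Qed.
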